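(* Let $h_{1},h_{2},f:\mathbb{C}\to\mathbb{C}$ be any functions, and let $a,b:\mathbb{C}\to\mathbb{C}$ be functions such that for all $x$ \[ b(x)=-h_{1}(x)h_{2}(x),\qquad f(x)a(x)=f(x-1)h_{1}(x)+f(x+1)h_{2}(x+1). \] Then the sequence $F_{n}=f(n)\cdot\prod_{k=1}^{n}h_{2}(k)$ solves the recurrence \[ F_{n-1}b(n)+F_{n}a(n)=F_{n+1}, \] and for every $n\ge 1$, \[ \mathbb{K}_{1}^{n}\frac{b(i)}{a(i)}=\frac{f(1)h_{2}(1)}{f(0)}\left(\frac{1}{\sum_{k=0}^{n}\frac{f(0)f(1)}{f(k)f(k+1)}\prod_{i=1}^{k}\left(\frac{h_{1}(i)}{h_{2}(i+1)}\right)}-1\right). \]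
   Context: For sequences $b_i,a_i$ of complex numbers, the finite continued fraction is \[ \mathbb{K}_{1}^{n}\frac{b_{i}}{a_{i}}:=\cfrac{b_{1}}{a_{1}+\cfrac{b_{2}}{a_{2}+\cfrac{b_{3}}{\ddots+\cfrac{b_{n}}{a_{n}+0}}}}\in\mathbb{C}\cup\{\infty\}, \] equivalently the image of $0$ under the composition of Möbius maps $z\mapsto \frac{b_1}{a_1+z}\circ\cdots\circ z\mapsto\frac{b_n}{a_n+z}$; here $\mathbb{K}_{1}^{n}\frac{b(i)}{a(i)}$ means $b_i=b(i)$, $a_i=a(i)$. *)

(* Defs.v *)
From mathcomp Require Import all_boot all_order all_algebra.
From mathcomp Require Import complex.
From mathcomp Require Import reals.
Set Implicit Arguments. Unset Strict Implicit. Unset Printing Implicit Defensive.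
Import Order.TTheory GRing.Theory Num.Theory.
Local Open Scope ring_scope.

(* The extended complex plane C ∪ {∞} is modelled as [option C]:
   [Some z] is the finite point z, [None] is ∞. *)

Definition mob {C : fieldType} (b a : C) (z : option C) : option C :=
  match z with
  | None => Some 0
  | Some w => if a + w == 0 then None else Some (b / (a + w))
  end.

Definition cfrac {C : fieldType} (b a : nat -> C) (n : nat) : option C :=
  foldr (fun i z => mob (b i) (a i) z) (Some 0) (iota 1 n).

(* Main.v *)
Require Import Defs.
From mathcomp Require Import all_boot all_order all_algebra.
From mathcomp Require Import complex.
From mathcomp Require Import reals.
From mathcomp Require Import ring zify.
Import Order.TTheory GRing.Theory Num.Theory.
Local Open Scope ring_scope.
Set Implicit Arguments. Unset Strict Implicit.
Section Gen.
Variable C : fieldType.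

Definition proj (v : C * C) : option C :=
  if v.2 == 0 then None else Some (v.1 / v.2).
Definition act (b a : C) (v : C * C) : C * C := (b * v.2, v.1 + a * v.2).

Lemma act_nz b a v : b != 0 -> v != (0,0) -> act b a v != (0,0).
Proof.
case: v => p q /= bn vn; apply/negP => /eqP [] /eqP.
rewrite mulf_eq0 (negbTE bn) /= => /eqP q0; rewrite q0 mulr0 addr0 => p0.
by move: vn; rewrite p0 q0 eqxx.
Qed.

Lemma mob_proj b a v : b != 0 -> v != (0,0) -> mob b a (proj v) = proj (act b a v).
Proof.
case: v => p q bn vn; rewrite /proj /act /=.
case: (eqVneq q 0) => [q0|qn] /=.
  have pn : p != 0 by apply: contraNneq vn => ->; rewrite q0.
  rewrite q0 !mulr0 addr0 (negbTE pn) mul0r //.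
have -> : (p + a * q == 0) = (a + p / q == 0).
  apply/idP/idP => /eqP E; apply/eqP.
    have -> : a + p / q = (p + a * q) / q by field.
    by rewrite E mul0r.
  have -> : p + a * q = (a + p / q) * q by field.
  by rewrite E mul0r.
case: eqP => // E; congr Some.
have nz : p + a * q != 0.
  have -> : p + a * q = (a + p / q) * q by field.
  by rewrite mulf_neq0 //; apply/eqP.
by field; rewrite nz qn.
Qed.

Lemma foldr_proj (bs as_ : nat -> C) s v :
  all (fun i => bs i != 0) s -> v != (0,0) ->
  foldr (fun i z => mob (bs i) (as_ i) z) (proj v) s
  = proj (foldr (fun i w => act (bs i) (as_ i) w) v s)
  /\ foldr (fun i w => act (bs i) (as_ i) w) v s != (0,0).
Proof.
move=> + vn; elim: s => [|i s IH] //= /andP [bi /IH [-> nz]].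
by rewrite mob_proj // act_nz.
Qed.

Definition Zf (bs as_ : nat -> C) s v := foldr (fun i w => act (bs i) (as_ i) w) v s.

Lemma foldr_lin (bs as_ : nat -> C) s p q :
  Zf bs as_ s (p, q) = (p * (Zf bs as_ s (1,0)).1 + q * (Zf bs as_ s (0,1)).1,
                        p * (Zf bs as_ s (1,0)).2 + q * (Zf bs as_ s (0,1)).2).
Proof.
rewrite /Zf; elim: s p q => [|i s IH] p q /=.
  by congr (_,_); rewrite !mulr1 !mulr0 ?addr0 ?add0r.
rewrite (IH p q) /=.
set x1 := (foldr _ (1,0) s).1; set x2 := (foldr _ (1,0) s).2.
set y1 := (foldr _ (0,1) s).1; set y2 := (foldr _ (0,1) s).2.
congr (_,_); rewrite /=; ring.
Qed.

Definition Yv (bs as_ : nat -> C) n := Zf bs as_ (iota 1 n) (0,1).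

Lemma Zf_iotaS (bs as_ : nat -> C) n v :
  Zf bs as_ (iota 1 n.+1) v = Zf bs as_ (iota 1 n) (act (bs n.+1) (as_ n.+1) v).
Proof. by rewrite -[in iota 1 n.+1](addn1 n) iotaD /Zf foldr_cat add1n. Qed.

Lemma Y_rec (bs as_ : nat -> C) n :
  Yv bs as_ n.+2 = (bs n.+2 * (Yv bs as_ n).1 + as_ n.+2 * (Yv bs as_ n.+1).1,
                    bs n.+2 * (Yv bs as_ n).2 + as_ n.+2 * (Yv bs as_ n.+1).2).
Proof.
rewrite /Yv Zf_iotaS.
have -> : act (bs n.+2) (as_ n.+2) (0,1) = (bs n.+2, as_ n.+2) by rewrite /act /= !mulr1 add0r.
rewrite foldr_lin [Zf _ _ _ (1,0)]Zf_iotaS.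
have -> : act (bs n.+1) (as_ n.+1) (1,0) = (0,1) by rewrite /act /= !mulr0 addr0.
by [].
Qed.

Lemma alg (F1 F2 F3 T0 t1 t2 bv av c d : C) :
  F3 = F1 * bv + F2 * av -> F3 * t2 = - bv * (F1 * t1) ->
  (F3 * (1 - (T0 + t1 + t2)) / c, F3 * (T0 + t1 + t2) / d) =
  (bv * (F1 * (1 - T0) / c) + av * (F2 * (1 - (T0 + t1)) / c),
   bv * (F1 * T0 / d) + av * (F2 * (T0 + t1) / d)).
Proof.
move=> E1 E2.
have key : F3 * (T0 + t1 + t2) = bv * F1 * T0 + av * F2 * (T0 + t1).
  transitivity (F3 * (T0 + t1) + F3 * t2); first by ring.
  by rewrite E2 E1; ring.
congr (_,_).
  transitivity ((F3 - F3 * (T0 + t1 + t2)) / c); first by ring.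
  by rewrite key E1; ring.
transitivity ((F3 * (T0 + t1 + t2)) / d); first by ring.
by rewrite key; ring.
Qed.

Definition tt (f h1 h2 : C -> C) (k : nat) :=
  f 0 * f 1 / (f k%:R * f k.+1%:R) * \prod_(1 <= i < k.+1) (h1 i%:R / h2 i.+1%:R).
Definition TT f h1 h2 k := \sum_(0 <= j < k.+1) tt f h1 h2 j.
Definition FF (f h2 : C -> C) (n : nat) := f n%:R * \prod_(1 <= k < n.+1) h2 k%:R.
Lemma TTS f h1 h2 k : TT f h1 h2 k.+1 = TT f h1 h2 k + tt f h1 h2 k.+1.
Proof. by rewrite /TT big_nat_recr. Qed.

Definition cand f h1 h2 m :=
  (FF f h2 m.+1 * (1 - TT f h1 h2 m) / f 0, FF f h2 m.+1 * TT f h1 h2 m / (f 1 * h2 1)).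

End Gen.


Theorem theorem1 (R : realType) (h1 h2 f a b : R[i] -> R[i])
  (Hb : forall x, b x = - (h1 x * h2 x))
  (Ha : forall x, f x * a x = f (x - 1) * h1 x + f (x + 1) * h2 (x + 1)) :
  let F := fun n : nat => f n%:R * \prod_(1 <= k < n.+1) h2 k%:R in
  (forall n : nat, (1 <= n)%N -> F n.-1 * b n%:R + F n * a n%:R = F n.+1) /\
  (forall n : nat, (1 <= n)%N ->
     (forall k : nat, (k <= n.+1)%N -> f k%:R != 0) ->
     (forall i : nat, (1 <= i <= n)%N -> h1 i%:R != 0) ->
     (forall i : nat, (1 <= i <= n.+1)%N -> h2 i%:R != 0) ->
     let S := \sum_(0 <= k < n.+1)
                (f 0 * f 1) / (f k%:R * f k.+1%:R)
                * \prod_(1 <= i < k.+1) (h1 i%:R / h2 i.+1%:R) in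
     cfrac (fun i => b i%:R) (fun i => a i%:R) n =
       (if S == 0 then None (* 1/S = ∞, and c*(∞-1) = ∞ since c <> 0 *)
        else Some ((f 1 * h2 1) / f 0 * (S^-1 - 1)))).
Proof.
move=> F.
have EF : forall n, F n = FF f h2 n by [].
have P1 : forall m : nat, F m * b m.+1%:R + F m.+1 * a m.+1%:R = F m.+2.
  move=> m; rewrite !EF /FF.
  set P := \prod_(1 <= k < m.+1) h2 k%:R.
  have Pm1 : \prod_(1 <= k < m.+2) h2 k%:R = P * h2 m.+1%:R by rewrite big_nat_recr.
  have Pm2 : \prod_(1 <= k < m.+3) h2 k%:R = P * h2 m.+1%:R * h2 m.+2%:R.
    by rewrite big_nat_recr // Pm1.
  rewrite Pm2 Pm1 Hb.
  have E := Ha m.+1%:R.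
  rewrite -natr1 addrK !natr1 in E.
  transitivity (P * h2 m.+1%:R * (f m.+1%:R * a m.+1%:R) - P * h2 m.+1%:R * (f m%:R * h1 m.+1%:R)).
    by ring.
  by rewrite E; ring.
split.
  by case=> // m _ /=; apply: P1.
case=> // n _ Hf Hh1 Hh2 S.
have ES : S = TT f h1 h2 n.+1 by [].
rewrite ES.
have f0 : f 0 != 0 by have := Hf 0%N isT; rewrite mulr0n.
have f1 : f 1 != 0 by have := Hf 1%N isT; rewrite mulr1n.
have h21 : h2 1 != 0 by have := Hh2 1%N isT; rewrite mulr1n.
have key : forall m, (m.+2 <= n.+1)%N ->
    F m.+3 * tt f h1 h2 m.+2 = - b m.+2%:R * (F m.+1 * tt f h1 h2 m.+1).
  move=> m hm; rewrite !EF /FF /tt Hb opprK.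
  rewrite (big_nat_recr m.+3) // (big_nat_recr m.+2) // (big_nat_recr m.+2) //=.
  have := Hf m.+1 ltac:(lia); have := Hf m.+2 ltac:(lia); have := Hf m.+3 ltac:(lia).
  have := Hh2 m.+3 ltac:(lia).
  move=> H1 H2 H3 H4; field.
  by rewrite H1 H2 H3 H4.
pose bb := fun i : nat => b i%:R.
pose aa := fun i : nat => a i%:R.
have main : forall m, (m.+1 <= n.+1)%N ->
    Yv bb aa m = cand f h1 h2 m /\ Yv bb aa m.+1 = cand f h1 h2 m.+1.
  elim => [_|m IH hm].
    split.
      rewrite /Yv /Zf /= /cand /TT /FF /tt !big_nat1 big_geq // mulr0n mulr1n.
      congr (_,_); field.
        by rewrite f0 f1.
      by rewrite f0 f1 h21.
    rewrite /Yv /Zf /= /cand /TT /FF /tt.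
    rewrite big_nat_recr //= !big_nat1 big_nat_recr //= !big_nat1 big_geq //=.
    rewrite mulr0n mulr1n /bb /aa mulr1n.
    have f2 : f 2%:R != 0 by apply: Hf; lia.
    have h22 : h2 2%:R != 0 by apply: Hh2; lia.
    have E := Ha 1.
    rewrite subrr -mulr2n in E.
    have Ea : a 1 = (f 0 * h1 1 + f 2%:R * h2 2%:R) / f 1 by rewrite -E; field.
    rewrite Hb Ea.
    congr (_,_) => /=; field.
      by rewrite ?f0 ?f1 ?f2 ?h22 ?h21.
    by rewrite ?f0 ?f1 ?f2 ?h22 ?h21.
  have [Y1 Y2] := IH (ltnW hm).
  split; first by [].
  rewrite Y_rec Y1 Y2 /cand (TTS _ _ _ m.+1) (TTS _ _ _ m) /=.
  symmetry; apply: alg.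
    by rewrite -!EF -P1 mulrC (mulrC (F m.+2)).
  by rewrite -!EF key.
have [_ Yn] := main n (leqnn _).
rewrite /cfrac.
have -> : Some (0 : R[i]) = proj (0,1) by rewrite /proj /= oner_eq0 mul0r.
have allb : all (fun i => bb i != 0) (iota 1 n.+1).
  apply/allP => i; rewrite mem_iota => /andP [hi1 hi2].
  rewrite /bb Hb oppr_eq0 mulf_neq0 //; [apply: Hh1 | apply: Hh2]; lia.
have nz01 : ((0 : R[i]), (1 : R[i])) != (0,0) by rewrite xpair_eqE oner_eq0 andbF.
have [-> _] := foldr_proj aa allb nz01.
rewrite -/(Zf bb aa (iota 1 n.+1) (0,1)) -/(Yv bb aa n.+1) Yn /proj /cand /=.
have Fn : FF f h2 n.+2 != 0.
  rewrite /FF mulf_neq0 ?Hf // prodf_seq_neq0.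
  apply/allP => i; rewrite mem_index_iota => /andP [hi1 hi2].
  by apply: Hh2; lia.
case: (eqVneq (TT f h1 h2 n.+1) 0) => [->|Tn].
  by rewrite mulr0 mul0r eqxx.
have nzd : FF f h2 n.+2 * TT f h1 h2 n.+1 / (f 1 * h2 1) != 0.
  apply: mulf_neq0; first exact: mulf_neq0.
  by rewrite invr_eq0; apply: mulf_neq0.
rewrite (negbTE nzd).
congr Some; field.
by rewrite Fn Tn f0 f1 h21.
Qed.
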